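(* Let $n\ge 1$ and let $U,V$ be $2^n\times 2^n$ unitary matrices that are functionally distinct, i.e. there is no $\theta\in\mathbb{R}$ with $V=e^{i\theta}U$. Then there exists at least one local quantum stimulus $\ket{l}=\ket{l_{n-1}}\otimes\cdots\otimes\ket{l_0}$, with each $\ket{l_j}\in\{\ket{0},\ket{1},\ket{+},\ket{-},\ket{\uparrow},\ket{\downarrow}\}$, such that $\mathcal{F}(U\ket{l},V\ket{l})\neq 1$.
   Context: Single-qubit states: $\ket{0},\ket{1}$ are the computational basis vectors of $\mathbb{C}^2$, $\ket{\pm}=\tfrac{1}{\sqrt2}(\ket{0}\pm\ket{1})$, $\ket{\uparrow}=\tfrac{1}{\sqrt2}(\ket{0}+i\ket{1})$, $\ket{\downarrow}=\tfrac{1}{\sqrt2}(\ket{0}-i\ket{1})$. The $6^n$ tensor products $\ket{l_{n-1}}\otimes\cdots\otimes\ket{l_0}$ of such states are the local quantum stimuli in $(\mathbb{C}^2)^{\otimes n}\cong\mathbb{C}^{2^n}$. For unit vectors $\ket{\psi},\ket{\phi}$, the fidelity is $\mathcal{F}(\ket{\psi},\ket{\phi})=|\langle\psi|\phi\rangle|^2\in[0,1]$. *)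

(* Defs.v *)
From HB Require Import structures.
From mathcomp Require Import all_boot all_order all_algebra.
From mathcomp Require Import complex.
From mathcomp Require Import reals trigo.
Set Implicit Arguments. Unset Strict Implicit. Unset Printing Implicit Defensive.
Import Order.TTheory GRing.Theory Num.Theory.
Local Open Scope ring_scope.
Local Open Scope complex_scope.

Inductive qstate := Q0 | Q1 | Qplus | Qminus | Qup | Qdown.

Section Defs.
Variable R : realType.
Local Notation C := R[i].

Definition isqrt2 : C := ((Num.sqrt (2 : R))^-1)%:C.
Definition imag_i : C := 0 +i* 1.

(* amplitude <b|l> of single-qubit state l on basis vector |b>, b = false ~ |0>, true ~ |1> *)
Definition amp (l : qstate) (b : bool) : C :=
  match l, b with
  | Q0, false => 1 | Q0, true => 0
  | Q1, false => 0 | Q1, true => 1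
  | Qplus, _ => isqrt2
  | Qminus, false => isqrt2 | Qminus, true => - isqrt2
  | Qup, false => isqrt2 | Qup, true => imag_i * isqrt2
  | Qdown, false => isqrt2 | Qdown, true => - (imag_i * isqrt2)
  end.

(* |l_{n-1}> ⊗ ... ⊗ |l_0> : basis index k = sum_j b_j 2^j, qubit j carries bit j *)
Definition stimulus (n : nat) (l : 'I_n -> qstate) : 'cV[C]_(2 ^ n) :=
  \col_(k < 2 ^ n) \prod_(j < n) amp (l j) (odd (k %/ 2 ^ j)).

Definition inner (m : nat) (psi phi : 'cV[C]_m) : C :=
  \sum_(k < m) (psi k 0)^* * phi k 0.

Definition fidelity (m : nat) (psi phi : 'cV[C]_m) : C := `|inner psi phi| ^+ 2.

Definition adjoint (m : nat) (A : 'M[C]_m) : 'M[C]_m := (map_mx Num.conj A)^T.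

Definition unitary (m : nat) (A : 'M[C]_m) : Prop := adjoint A *m A = 1%:M.

Definition expi (t : R) : C := cos t +i* sin t.

End Defs.
Arguments stimulus {R n} l.
Arguments expi {R} t.

(* Main.v *)
Require Import Defs.
From HB Require Import structures.
From mathcomp Require Import all_boot all_order all_algebra.
From mathcomp Require Import complex.
From mathcomp Require Import reals trigo.
From mathcomp Require Import ring lra.
From Stdlib Require Import Classical_Prop.
Import Order.TTheory GRing.Theory Num.Theory.
Local Open Scope ring_scope.
Local Open Scope complex_scope.

Section Aux.
Variable R : realType.
Local Notation C := R[i].

Lemma inner_mx m (psi phi : 'cV[C]_m) :
  inner psi phi = ((map_mx Num.conj psi)^T *m phi) 0 0.
Proof. by rewrite /inner !mxE; apply: eq_bigr => k _; rewrite !mxE. Qed.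

Lemma adjM m (A B : 'M[C]_m) : adjoint (A *m B) = adjoint B *m adjoint A.
Proof. by rewrite /adjoint map_mxM trmx_mul. Qed.

Lemma quad m (U V : 'M[C]_m) (x : 'cV[C]_m) :
  inner (U *m x) (V *m x) = ((map_mx Num.conj x)^T *m (adjoint U *m V) *m x) 0 0.
Proof. by rewrite inner_mx map_mxM trmx_mul /adjoint !mulmxA. Qed.

Lemma bits_eq n : forall i k, (i < 2 ^ n)%N -> (k < 2 ^ n)%N ->
  (forall j, (j < n)%N -> odd (i %/ 2 ^ j)%N = odd (k %/ 2 ^ j)%N) -> i = k.
Proof.
elim: n => [|n IH] i k.
  by rewrite expn0 !ltnS !leqn0 => /eqP -> /eqP ->.
move=> hi hk hb.
have h0 := hb 0%N (ltn0Sn _); rewrite expn0 !divn1 in h0.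
have hh : (i %/ 2 = k %/ 2)%N.
  apply: IH.
  - by rewrite ltn_divLR // -expnSr.
  - by rewrite ltn_divLR // -expnSr.
  move=> j hj; rewrite -!divnMA -expnS; exact: hb.
by rewrite -(odd_double_half i) -(odd_double_half k) h0 -!divn2 hh.
Qed.

Definition lb n (k : nat) : 'I_n -> qstate :=
  fun j => if odd (k %/ 2 ^ j)%N then Q1 else Q0.

Lemma stim_basis n (k : 'I_(2 ^ n)) : stimulus (lb n k) = delta_mx k 0 :> 'cV[C]_(2^n).
Proof.
apply/matrixP => i z; rewrite !mxE (ord1 z) eqxx andbT.
have hamp c b : amp R (if c then Q1 else Q0) b = (b == c)%:R by case: c; case: b.
case: (eqVneq i k) => [->|hik] /=.
  by rewrite big1 // => j _; rewrite /lb hamp eqxx.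
case: (boolP [exists j : 'I_n, odd (i %/ 2 ^ j)%N != odd (k %/ 2 ^ j)%N]).
  move/existsP => [j hj]; rewrite (bigD1 j) //= /lb hamp (negbTE hj) mul0r //.
rewrite negb_exists => /forallP hall; exfalso; move/eqP: hik; apply.
apply/val_inj/(@bits_eq n) => //= j hj.
by have := hall (Ordinal hj); rewrite negbK => /eqP.
Qed.


Lemma isqrt2_real : isqrt2 R \is Num.real.
Proof. by apply: ger0_real; rewrite /isqrt2 ler0c invr_ge0 sqrtr_ge0. Qed.

Lemma isqrt2_sq : isqrt2 R * isqrt2 R = 2^-1.
Proof.
rewrite /isqrt2 -rmorphM -invfM -expr2 sqr_sqrtr ?ler0n //.
by rewrite fmorphV rmorph_nat.
Qed.

Definition lp n : 'I_n -> qstate := fun _ => Qplus.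

Lemma stim_plus n : stimulus (lp n) = const_mx (isqrt2 R ^+ n) :> 'cV[C]_(2^n).
Proof. by apply/matrixP => i z; rewrite !mxE prodr_const card_ord. Qed.

Lemma eq_case N (a : 'I_N -> C) (m : C) :
  (forall i, a i * (a i)^* = 1) -> m * m^* = 1 ->
  \sum_i a i = N%:R * m -> forall i, a i = m.
Proof.
move=> ha hm hs i.
have h0 : \sum_j (a j - m) * (a j - m)^* = 0.
  have -> : \sum_j (a j - m) * (a j - m)^* =
     \sum_j (a j * (a j)^* + m * m^*) - (\sum_j a j) * m^* - m * (\sum_j a j)^*.
    rewrite mulr_suml rmorph_sum mulr_sumr -!sumrB; apply: eq_bigr => j _.
    rewrite rmorphB /=; ring.
  rewrite hs rmorphM /= conjC_nat.
  rewrite (eq_bigr (fun _ => 2)); last by move=> j _; rewrite ha hm.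
  rewrite sumr_const card_ord.
  have -> : N%:R * m * m^* = N%:R * (m * m^*) by ring.
  have -> : m * (N%:R * m^*) = N%:R * (m * m^*) by ring.
  rewrite hm mulr1 -mulr_natr; ring.
have := psumr_eq0P _ h0 (isT : true) => /(_ _) h.
have /eqP : (a i - m) * (a i - m)^* = 0.
  apply: h => j _; rewrite -normCK; exact: exprn_ge0.
rewrite mulf_eq0 conjC_eq0 orbb subr_eq0 => /eqP //.
Qed.

Lemma polar (m : C) : m * m^* = 1 -> exists t : R, m = expi t.
Proof.
move=> hm.
have hn : `|m| ^+ 2 = 1 by rewrite normCK.
have := add_Re2_Im2 m; rewrite hn -[1 : C]/((1 : R)%:C) => /complexI.
case: m {hm hn} => a b /= hab.
have ha : -1 <= a <= 1 by apply/andP; split; nra.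
have hs : Num.sqrt (1 - a ^+ 2) = `|b|.
  by rewrite -hab addrC addKr sqrtr_sqr.
have hin : a \in `[-1, 1] by rewrite in_itv /=.
case: (lerP 0 b) => hb.
  exists (acos a); rewrite /expi acosK // sin_acos // hs ger0_norm //.
exists (- acos a); rewrite /expi cosN sinN acosK // sin_acos // hs ltr0_norm //.
by rewrite opprK.
Qed.

End Aux.

Theorem theorem1 (R : realType) (n : nat) (hn : (1 <= n)%N)
    (U V : 'M[R[i]]_(2 ^ n)) :
  unitary U -> unitary V ->
  ~ (exists theta : R, V = expi theta *: U) ->
  exists l : 'I_n -> qstate,
    fidelity (U *m stimulus l) (V *m stimulus l) != 1.
Proof.
move=> hU hV hne; apply: Classical_Prop.NNPP => hno; apply: hne.
have hF l : fidelity (U *m stimulus l) (V *m stimulus l) = 1.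
  by apply/eqP; apply/negPn/negP => h; apply: hno; exists l.
set W := adjoint U *m V.
have hUU : U *m adjoint U = 1%:M by apply: mulmx1C.
have hVW : V = U *m W by rewrite /W mulmxA hUU mul1mx.
have hWu : adjoint W *m W = 1%:M.
  rewrite /W adjM.
  have -> : adjoint (adjoint U) = U.
    by apply/matrixP => i j; rewrite !mxE conjCK.
  by rewrite !mulmxA -(mulmxA _ U) hUU mulmx1 hV.
have hdiag k : `|W k k| ^+ 2 = 1.
  have := hF (lb n k); rewrite /fidelity quad stim_basis.
  have -> : map_mx Num.conj (delta_mx k 0) = delta_mx k 0 :> 'cV[R[i]]_(2^n).
    by apply/matrixP => i j; rewrite !mxE conjC_nat.
  by rewrite trmx_delta -rowE -colE !mxE.
have hoff i k : i != k -> W i k = 0.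
  move=> hik.
  have hs : \sum_j `|W j k| ^+ 2 = 1.
    have := hWu; move/matrixP/(_ k k); rewrite !mxE eqxx /= => hkk; rewrite -[RHS]hkk.
    apply: eq_bigr => j _; rewrite !mxE normCK mulrC //.
  move: hs; rewrite (bigD1 k) //= hdiag -[X in _ = X]addr0 => /addrI h0.
  have := psumr_eq0P (fun j _ => exprn_ge0 2 (normr_ge0 (W j k))) h0 hik.
  by move/eqP; rewrite expf_eq0 /= normr_eq0 => /eqP.
pose t : R[i] := isqrt2 R ^+ n * isqrt2 R ^+ n.
have ht : t = (2^-1) ^+ n by rewrite /t -exprMn isqrt2_sq.
pose S := \sum_k W k k.
have hq : inner (U *m stimulus (lp n)) (V *m stimulus (lp n)) = t * S.
  rewrite quad stim_plus.
  have -> : map_mx Num.conj (const_mx (isqrt2 R ^+ n)) =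
      const_mx (isqrt2 R ^+ n) :> 'cV[R[i]]_(2^n).
    by apply/matrixP => i j; rewrite !mxE conj_Creal // realX // isqrt2_real.
  rewrite mxE /S /t mulr_sumr; apply: eq_bigr => k _.
  rewrite !mxE (bigD1 k) //= big1 ?addr0.
    by rewrite !mxE; ring.
  by move=> i hik; rewrite hoff // !mxE mulr0.
pose mm := t * S.
have hmm : mm * mm^* = 1.
  by rewrite -normCK -(hF (lp n)) /fidelity hq.
have hN : (2 ^ n)%:R * t = 1.
  by rewrite ht natrX -exprMn mulfV ?expr1n // pnatr_eq0.
have hall := @eq_case R _ (fun k => W k k) mm
   (fun k => ltac:(by rewrite -normCK hdiag)) hmm
   ltac:(by rewrite /mm mulrA hN mul1r).
have hWs : W = mm%:M.
  apply/matrixP => i j; rewrite [RHS]mxE.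
  case: (eqVneq i j) => [->|hij]; first by rewrite hall ?eqxx ?mulr1n.
  by rewrite hoff // (negbTE hij) ?mulr0n.
have [th hth] := @polar R _ hmm.
by exists th; rewrite hVW hWs mul_mx_scalar hth.
Qed.
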